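(* Let $k\ge1$ be an integer, let $G$ be a graph and let $A,B\subseteq V(G)$ satisfy $\mathrm{dist}(A,B)>2^k$ and \[\mathrm{tp}_k\big(G\langle X\mapsto A\rangle[N_{2^{k-1}-1}[A]]\big)=\mathrm{tp}_k\big(G\langle X\mapsto B\rangle[N_{2^{k-1}-1}[B]]\big).\] Let $\bar w\in V(G)^{|\bar y|}$ be a tuple of vertices with $\mathrm{dist}(\bar w,A\cup B)\ge 2^k$. Then for every first-order formula $\varphi(\bar y,x)$ of quantifier rank at most $k-1$ in the signature of $G$, \[G\langle A\rangle\models\exists x\in A\ \varphi(\bar w,x)\iff G\langle B\rangle\models\exists x\in B\ \varphi(\bar w,x).\]
   Context: Graphs are finite, loopless, undirected, with finitely many unary color predicates. $\mathrm{dist}(\bar a,\bar b)$ is the minimum distance between an element of $\bar a$ and one of $\bar b$ (sets or tuples); $N_r[S]$ is the set of vertices at distance at most $r$ from $S$. $G\langle X\mapsto W\rangle$ is $G$ expanded by a new unary predicate $X$ interpreted as $W$; $G\langle W\rangle$ denotes the expansion by a new unary predicate (also named $W$) interpreted as $W$, and $\exists x\in W\,\psi$ abbreviates $\exists x\,(W(x)\wedge\psi)$. $H[S]$ is the induced substructure (colors restricted). $\mathrm{tp}_k(H)$ is the set of first-order sentences of quantifier rank at most $k$ (over the signature of $H$) true in $H$; equality of types means the two structures satisfy the same such sentences. *)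

(* Defs.v *)
From HB Require Import structures.
From mathcomp Require Import all_boot.
Set Implicit Arguments. Unset Strict Implicit. Unset Printing Implicit Defensive.

Record structure (c : nat) := Struct {
  dom :> finType;
  adj : rel dom;
  col : 'I_c -> pred dom }.
Arguments dom {c} s.
Arguments adj {c} s.
Arguments col {c} s.

Definition is_graph c (G : structure c) : Prop :=
  irreflexive (adj G) /\ symmetric (adj G).

Inductive formula (c : nat) : Type :=
| FFalse
| FTrue
| FEq   of nat & nat
| FAdj  of nat & nat
| FCol  of 'I_c & nat
| FNot  of formula c
| FAnd  of formula c & formula c
| FOr   of formula c & formula c
| FImp  of formula c & formula c
| FEx   of nat & formula c
| FAll  of nat & formula c.
Arguments FFalse {c}. Arguments FTrue {c}.
Arguments FEq {c}. Arguments FAdj {c}.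

Fixpoint qrank c (f : formula c) : nat :=
  match f with
  | FNot g => qrank g
  | FAnd g h | FOr g h | FImp g h => maxn (qrank g) (qrank h)
  | FEx _ g | FAll _ g => (qrank g).+1
  | _ => 0
  end.

Fixpoint fv c (f : formula c) : seq nat :=
  match f with
  | FEq u v | FAdj u v => [:: u; v]
  | FCol _ v => [:: v]
  | FNot g => fv g
  | FAnd g h | FOr g h | FImp g h => fv g ++ fv h
  | FEx x g | FAll x g => filter (fun y => y != x) (fv g)
  | _ => [::]
  end.

Definition sentence c (f : formula c) : bool := nilp (fv f).

(* Assignments are partial (so that empty structures are handled correctly);
   atoms mentioning an unassigned variable are false. *)
Definition upd (T : Type) (env : nat -> option T) (x : nat) (a : T) :=
  fun i => if i == x then Some a else env i.

Fixpoint holds c (M : structure c) (env : nat -> option M) (f : formula c) : Prop :=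
  match f with
  | FFalse => False
  | FTrue => True
  | FEq u v => match env u, env v with Some a, Some b => a = b | _, _ => False end
  | FAdj u v => match env u, env v with Some a, Some b => adj M a b | _, _ => False end
  | FCol i v => match env v with Some a => col M i a | None => False end
  | FNot g => ~ holds env g
  | FAnd g h => holds env g /\ holds env h
  | FOr g h => holds env g \/ holds env h
  | FImp g h => holds env g -> holds env h
  | FEx x g => exists a : M, holds (upd env x a) g
  | FAll x g => forall a : M, holds (upd env x a) g
  end.

Definition empty_env (T : Type) : nat -> option T := fun _ => None.

Definition models c (M : structure c) (f : formula c) : Prop :=
  holds (@empty_env M) f.

Definition same_type c (k : nat) (M N : structure c) : Prop :=
  forall f : formula c, sentence f -> qrank f <= k -> (models M f <-> models N f).

(* Expansion M<X |-> W>: new colour with index ord_max. *)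
Definition expand c (M : structure c) (W : {set M}) : structure c.+1 :=
  @Struct c.+1 M (adj M)
    (fun i => match unlift ord_max i with
              | Some j => col M j
              | None => fun x => x \in W
              end).

Definition induced c (M : structure c) (S : {set M}) : structure c :=
  @Struct c {x : M | x \in S}
    (fun x y => adj M (val x) (val y))
    (fun i x => col M i (val x)).

Fixpoint liftf c (f : formula c) : formula c.+1 :=
  match f with
  | FFalse => FFalse
  | FTrue => FTrue
  | FEq u v => FEq u v
  | FAdj u v => FAdj u v
  | FCol i v => FCol (lift ord_max i) v
  | FNot g => FNot (liftf g)
  | FAnd g h => FAnd (liftf g) (liftf h)
  | FOr g h => FOr (liftf g) (liftf h)
  | FImp g h => FImp (liftf g) (liftf h)
  | FEx x g => FEx x (liftf g)
  | FAll x g => FAll x (liftf g)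
  end.

Fixpoint within c (M : structure c) (r : nat) (u v : M) : bool :=
  match r with
  | 0 => u == v
  | r'.+1 => within r' u v || [exists z, within r' u z && adj M z v]
  end.

Definition nbhd c (M : structure c) (r : nat) (S : {set M}) : {set M} :=
  [set v | [exists s in S, within r s v]].

Definition dist_gt c (M : structure c) (S1 S2 : {set M}) (d : nat) : Prop :=
  forall a b, a \in S1 -> b \in S2 -> ~~ within d a b.

(* Main.v *)
Require Import Defs.
From mathcomp Require Import all_boot zify.
From Stdlib Require Import Classical.
Set Implicit Arguments. Unset Strict Implicit. Unset Printing Implicit Defensive.

Section Within.
Variables (c : nat) (M : structure c).

Lemma withinS n (u v : M) : within n u v -> within n.+1 u v.
Proof. by move=> h /=; rewrite h. Qed.

Lemma within_mono m n (u v : M) : m <= n -> within m u v -> within n u v.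
Proof.
move=> /subnKC <-; elim: (n - m) => [|d IH] h; first by rewrite addn0.
by rewrite addnS; apply: withinS; apply: IH.
Qed.

Lemma within_trans m n (u v w : M) : within m u v -> within n v w -> within (m + n) u w.
Proof.
move=> h1; elim: n w => [|n IH] w /=; first by move/eqP <-; rewrite addn0.
rewrite addnS /= => /orP [h|/existsP [z /andP [hz hzw]]].
  by rewrite IH.
by apply/orP; right; apply/existsP; exists z; rewrite IH.
Qed.

Lemma within_split m n (u w : M) : within (m + n) u w -> exists v, within m u v /\ within n v w.
Proof.
elim: n w => [|n IH] w; first by rewrite addn0 => h; exists w; split => //=.
rewrite addnS /= => /orP [h|/existsP [z /andP [hz hzw]]].
  by have [v [h1 h2]] := IH _ h; exists v; split => //; apply: withinS.
have [v [h1 h2]] := IH _ hz; exists v; split => //=.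
by apply/orP; right; apply/existsP; exists z; rewrite h2.
Qed.

Lemma within1 (u v : M) : within 1 u v <-> u = v \/ adj M u v.
Proof.
split => /=.
  case/orP => [/eqP ->|/existsP [z /andP [/eqP <- h]]]; by [left|right].
case => [->|h]; first by rewrite eqxx.
by apply/orP; right; apply/existsP; exists u; rewrite eqxx h.
Qed.

Lemma within_refl n (u : M) : within n u u.
Proof. by apply: (@within_mono 0) => //=. Qed.

Hypothesis Msym : symmetric (adj M).

Lemma within_sym n (u v : M) : within n u v -> within n v u.
Proof.
elim: n u v => [|n IH] u v /=; first by rewrite eq_sym.
case/orP => [h|/existsP [z /andP [hz hzv]]]; first by rewrite IH.
have h1 : within 1 v z by apply/within1; right; rewrite Msym.
have := within_trans h1 (IH _ _ hz); by rewrite add1n.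
Qed.

End Within.

Lemma holds_ext c (M : structure c) (f : formula c) (e e' : nat -> option M) :
  (forall v, v \in fv f -> e v = e' v) -> (holds e f <-> holds e' f).
Proof.
elim: f e e' => //=.
- move=> u v e e' h; rewrite (h u) ?(h v) // !inE eqxx ?orbT //.
- move=> u v e e' h; rewrite (h u) ?(h v) // !inE eqxx ?orbT //.
- move=> i v e e' h; rewrite (h v) // inE eqxx //.
- move=> g IH e e' h; by rewrite (IH e e' h).
- move=> g IHg g' IHg' e e' h.
  rewrite (IHg e e') ?(IHg' e e') // => v hv; apply: h; rewrite mem_cat hv ?orbT //.
- move=> g IHg g' IHg' e e' h.
  rewrite (IHg e e') ?(IHg' e e') // => v hv; apply: h; rewrite mem_cat hv ?orbT //.
- move=> g IHg g' IHg' e e' h.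
  rewrite (IHg e e') ?(IHg' e e') // => v hv; apply: h; rewrite mem_cat hv ?orbT //.
- move=> x g IH e e' h; split => -[a ha]; exists a; move: ha; apply IH => v hv;
  rewrite /upd; case: eqP => // /eqP nx; (apply: h || (symmetry; apply: h)); by rewrite mem_filter nx.
- move=> x g IH e e' h; split => ha a; move: (ha a); apply IH => v hv;
  rewrite /upd; case: eqP => // /eqP nx; (apply: h || (symmetry; apply: h)); by rewrite mem_filter nx.
Qed.


Definition Eqv c (M N : structure c) (r : nat) (e1 : nat -> option M) (e2 : nat -> option N) :=
  forall f : formula c, qrank f <= r -> (forall v, v \in fv f -> e1 v <> None) ->
    (holds e1 f <-> holds e2 f).

Definition domeq (T1 T2 : Type) (e1 : nat -> option T1) (e2 : nat -> option T2) :=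
  forall v, e1 v = None <-> e2 v = None.

Definition dropv (T : Type) (x : nat) (e : nat -> option T) : nat -> option T :=
  fun i => if i == x then None else e i.

Lemma Eqv_mono c (M N : structure c) r r' e1 e2 :
  r <= r' -> @Eqv c M N r' e1 e2 -> Eqv r e1 e2.
Proof. move=> hr h f hf; apply: h; exact: leq_trans hr. Qed.

Lemma Eqv_sym c (M N : structure c) r e1 e2 :
  domeq e1 e2 -> @Eqv c M N r e1 e2 -> Eqv r e2 e1.
Proof.
move=> hd h f hf hv; apply: iff_sym; apply: h => // v /hv.
by move=> h1 h2; apply: h1; apply/hd.
Qed.

Lemma Eqv_drop c (M N : structure c) r e1 e2 x :
  @Eqv c M N r e1 e2 -> Eqv r (dropv x e1) (dropv x e2).
Proof.
move=> h f hf hv.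
have hx : forall v, v \in fv f -> v != x.
  by move=> v /hv; rewrite /dropv; case: eqP.
rewrite (holds_ext (e' := e1)); last by move=> v /hx; rewrite /dropv => /negbTE ->.
rewrite [holds (dropv _ e2) _](holds_ext (e' := e2)); last by move=> v /hx; rewrite /dropv => /negbTE ->.
apply: h => // v hvf; have := hv _ hvf; by rewrite /dropv (negbTE (hx _ hvf)).
Qed.

Lemma domeq_upd (T1 T2 : Type) (e1 : nat -> option T1) (e2 : nat -> option T2) x a b :
  domeq e1 e2 -> domeq (upd e1 x a) (upd e2 x b).
Proof. by move=> h v; rewrite /upd; case: eqP. Qed.

Lemma domeq_drop (T1 T2 : Type) (e1 : nat -> option T1) (e2 : nat -> option T2) x :
  domeq e1 e2 -> domeq (dropv x e1) (dropv x e2).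
Proof. by move=> h v; rewrite /dropv; case: eqP. Qed.

Lemma Eqv_forth c (M N : structure c) r (e1 : nat -> option M) (e2 : nat -> option N) x a :
  Eqv r.+1 e1 e2 -> exists b, Eqv r (upd e1 x a) (upd e2 x b).
Proof.
move=> he; apply: NNPP => hn.
have H : forall b : N, exists f, [/\ qrank f <= r,
    (forall v, v \in fv f -> upd e1 x a v <> None), holds (upd e1 x a) f &
    ~ holds (upd e2 x b) f].
  move=> b; have hb := not_ex_all_not _ _ hn b.
  apply: NNPP => hf; apply: hb => f hr hd; split => h1; apply: NNPP => h2; apply: hf.
    by exists f; split.
  by exists (FNot f); split => //= h3; apply: h3.
have : forall s : seq N, exists F, [/\ qrank F <= r,
    (forall v, v \in fv F -> upd e1 x a v <> None), holds (upd e1 x a) F &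
    forall b, b \in s -> ~ holds (upd e2 x b) F].
  elim => [|b s [F [h1 h2 h3 h4]]]; first by exists FTrue; split.
  have [f [g1 g2 g3 g4]] := H b.
  exists (FAnd f F); split => //=.
  - by rewrite geq_max g1 h1.
  - by move=> v; rewrite mem_cat => /orP [/g2|/h2].
  - move=> b'; rewrite inE => /orP [/eqP ->|/h4 hb] [] //.
case/(_ (enum N)) => F [h1 h2 h3 h4].
have hF : holds e1 (FEx x F) by exists a.
have [] := he (FEx x F) h1.
  move=> v /=; rewrite mem_filter => /andP [nx /h2]; by rewrite /upd (negbTE nx).
move=> /(_ hF) [b hb] _; apply: (h4 b) => //; by rewrite mem_enum.
Qed.

Lemma Eqv_back c (M N : structure c) r (e1 : nat -> option M) (e2 : nat -> option N) x b :
  domeq e1 e2 -> Eqv r.+1 e1 e2 -> exists a, Eqv r (upd e1 x a) (upd e2 x b).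
Proof.
move=> hd he; have [a ha] := Eqv_forth x b (Eqv_sym hd he).
exists a; apply: Eqv_sym => //; apply: domeq_upd => v; exact: iff_sym (hd v).
Qed.

Fixpoint dfm c (j x y : nat) : formula c :=
  match j with
  | 0 => FOr (FEq x y) (FAdj x y)
  | j'.+1 => FEx (x + y).+1 (FAnd (dfm c j' x (x + y).+1) (dfm c j' (x + y).+1 y))
  end.

Lemma dfm_qrank c j x y : qrank (dfm c j x y) = j.
Proof. by elim: j x y => //= j IH x y; rewrite !IH maxnn. Qed.

Lemma dfm_fv c j x y v : v \in fv (dfm c j x y) -> v = x \/ v = y.
Proof.
elim: j x y => [|j IH] x y /=; first by rewrite !inE => /or4P [] /eqP; auto.
rewrite mem_filter mem_cat => /andP [nz /orP [/IH|/IH]] [] E; subst v; auto; by rewrite eqxx in nz.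
Qed.

Lemma pow2S j : 2 ^ j.+1 = 2 ^ j + 2 ^ j.
Proof. by rewrite expnS mul2n -addnn. Qed.

Lemma dfm_sem c (M : structure c) j x y (e : nat -> option M) a b :
  e x = Some a -> e y = Some b -> (holds e (dfm c j x y) <-> within (2 ^ j) a b).
Proof.
elim: j x y e a b => [|j IH] x y e a b ex ey /=.
  by rewrite ex ey within1.
have nx : x != (x + y).+1 by apply/eqP; lia.
have ny : y != (x + y).+1 by apply/eqP; lia.
rewrite pow2S; split.
  move=> [m [h1 h2]].
  have e1 : upd e (x + y).+1 m x = Some a by rewrite /upd (negbTE nx).
  have e2 : upd e (x + y).+1 m (x + y).+1 = Some m by rewrite /upd eqxx.
  have e3 : upd e (x + y).+1 m y = Some b by rewrite /upd (negbTE ny).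
  apply: within_trans; first exact: (proj1 (IH _ _ _ _ _ e1 e2) h1).
  exact: (proj1 (IH _ _ _ _ _ e2 e3) h2).
move=> /within_split [m [h1 h2]]; exists m.
have e1 : upd e (x + y).+1 m x = Some a by rewrite /upd (negbTE nx).
have e2 : upd e (x + y).+1 m (x + y).+1 = Some m by rewrite /upd eqxx.
have e3 : upd e (x + y).+1 m y = Some b by rewrite /upd (negbTE ny).
by split; [apply/(IH _ _ _ _ _ e1 e2)|apply/(IH _ _ _ _ _ e2 e3)].
Qed.

Fixpoint DX c (j x : nat) : formula c.+1 :=
  match j with
  | 0 => FCol ord_max x
  | j'.+1 => FEx x.+1 (FAnd (dfm c.+1 j' x x.+1) (DX c j' x.+1))
  end.

Lemma DX_qrank c j x : qrank (DX c j x) = j.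
Proof. by elim: j x => //= j IH x; rewrite IH dfm_qrank maxnn. Qed.

Lemma DX_fv c j x v : v \in fv (DX c j x) -> v = x.
Proof.
elim: j x => [|j IH] x /=; first by rewrite inE => /eqP.
rewrite mem_filter mem_cat => /andP [nz /orP [/dfm_fv [] E|/IH E]]; subst v => //;
  by rewrite eqxx in nz.
Qed.

Lemma DX_sem c (M : structure c.+1) j x (e : nat -> option M) a :
  e x = Some a -> (holds e (DX c j x) <-> exists2 z, col M ord_max z & within (2 ^ j).-1 a z).
Proof.
elim: j x e a => [|j IH] x e a ex /=.
  by rewrite ex; split => [h|[z h /eqP ->]] //; exists a => //.
have nx : x != x.+1 by apply/eqP; lia.
have hp := expn_gt0 2 j.
have E : (2 ^ j.+1).-1 = 2 ^ j + (2 ^ j).-1 by rewrite pow2S; lia.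
rewrite E; split.
  move=> [m [h1 h2]].
  have e1 : upd e x.+1 m x = Some a by rewrite /upd (negbTE nx).
  have e2 : upd e x.+1 m x.+1 = Some m by rewrite /upd eqxx.
  have [z hz hw] := proj1 (IH _ _ _ e2) h2.
  exists z => //; apply: (within_trans _ hw); exact: (proj1 (dfm_sem _ e1 e2) h1).
move=> [z hz /within_split [m [h1 h2]]]; exists m.
have e1 : upd e x.+1 m x = Some a by rewrite /upd (negbTE nx).
have e2 : upd e x.+1 m x.+1 = Some m by rewrite /upd eqxx.
split; first by apply/(dfm_sem _ e1 e2).
by apply/(IH _ _ _ e2); exists z.
Qed.


Lemma within_expand c (M : structure c) (W : {set M}) n (u v : M) :
  within (M := expand W) n u v = within (M := M) n u v.
Proof.
elim: n u v => //= n IH u v; rewrite IH; congr orb; apply: eq_existsb => z.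
by rewrite IH.
Qed.

Lemma within_ind_val c (M : structure c) (S : {set M}) n (u v : induced S) :
  within n u v -> within n (val u) (val v).
Proof.
elim: n v => [v /= /eqP -> //|n IH v] /=.
case/orP => [/IH -> //|/existsP [z /andP [hz hzv]]].
by apply/orP; right; apply/existsP; exists (val z); rewrite IH.
Qed.

Lemma within_val_ind c (M : structure c) (S : {set M}) n (u v : induced S) :
  (forall z, within n (val u) z -> z \in S) ->
  within n (val u) (val v) -> within n u v.
Proof.
elim: n v => /= [v _ /eqP /val_inj -> //|n IH v hS].
have hS' : forall z, within n (val u) z -> z \in S by move=> z /withinS /hS.
case/orP => [/(IH _ hS') -> //|/existsP [z /andP [hz hzv]]].
have zS : z \in S by apply: hS; apply/orP; left.
apply/orP; right; apply/existsP; exists (exist _ z zS) => /=.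
by rewrite hzv IH.
Qed.

Lemma liftf_holds c (M : structure c) (W : {set M}) (f : formula c) (e : nat -> option M) :
  holds (M := expand W) e (liftf f) <-> holds (M := M) e f.
Proof.
elim: f e => //=.
- move=> i v e; case: (e v) => // a; by rewrite liftK.
- by move=> g IH e; rewrite IH.
- by move=> g IHg g' IHg' e; rewrite IHg IHg'.
- by move=> g IHg g' IHg' e; rewrite IHg IHg'.
- by move=> g IHg g' IHg' e; rewrite IHg IHg'.
- move=> x g IH e; split=> -[a ha]; exists a; by apply/IH.
- move=> x g IH e; split=> ha a; by apply/IH.
Qed.


Section Main.
Variables (c K : nat) (G : structure c) (A B : {set G}).
Hypothesis Gsym : symmetric (adj G).
Hypothesis hAB : dist_gt A B (2 ^ K.+1).

Definition rho := 2 ^ K - 1.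
Local Notation NA := (induced (M := expand A) (nbhd (M := G) rho A)).
Local Notation NB := (induced (M := expand B) (nbhd (M := G) rho B)).
Local Notation wG := (within (M := G)).

Definition near (S : {set G}) d (u : G) := exists2 s, s \in S & wG d s u.

Lemma near_mono S d d' u : d <= d' -> near S d u -> near S d' u.
Proof. by move=> h [s hs w]; exists s => //; apply: within_mono w. Qed.

Lemma near_trans S d m u v : near S d u -> wG m u v -> near S (d + m) v.
Proof. by move=> [s hs w] h; exists s => //; apply: within_trans w h. Qed.

Lemma near_nbhd S d u : near S d u -> d <= rho -> u \in nbhd rho S.
Proof.
move=> [s hs w] hd; rewrite inE; apply/existsP; exists s; rewrite hs /=.
exact: within_mono w.
Qed.

Lemma notwithin_mono m n (p q : G) : m <= n -> ~~ wG n p q -> ~~ wG m p q.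
Proof. by move=> h; apply: contra; apply: within_mono. Qed.

Lemma cross p q : near A rho p -> near B rho q -> ~~ wG 1 p q.
Proof.
move=> [s hs ws] [t ht wt]; apply/negP => h.
have := within_trans (within_trans ws h) (within_sym Gsym wt).
move/(within_mono (n := 2 ^ K.+1)) => h'.
have := hAB hs ht; rewrite h' //.
rewrite /rho pow2S; have := expn_gt0 2 K; lia.
Qed.

Lemma cross' p q : near A rho p -> near B rho q -> ~~ wG 1 q p.
Proof.
by move=> h1 h2; apply/negP => /(within_sym Gsym) h; move: (cross h1 h2); rewrite h.
Qed.

Definition far r (ga : nat -> option NA) (gb : nat -> option NB) (o : G) :=
  (forall u al be, ga u = Some al -> gb u = Some be ->
     ~~ wG (2 ^ r) (val al) o /\ ~~ wG (2 ^ r) (val be) o) /\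
  (forall s, s \in A :|: B -> ~~ wG (2 ^ r - 1) s o).

Record InvP r (e1 e2 : nat -> option G) (ga : nat -> option NA) (gb : nat -> option NB)
  (ori : nat -> bool) : Prop := {
  i_r : r <= K;
  i_dom : domeq ga gb;
  i_eqv : Eqv r ga gb;
  i_game : forall v al be, ga v = Some al -> gb v = Some be ->
    [/\ e1 v = Some (if ori v then val al else val be),
        e2 v = Some (if ori v then val be else val al),
        near A (2 ^ K - 2 ^ r) (val al) & near B (2 ^ K - 2 ^ r) (val be)];
  i_id : forall v, ga v = None -> e1 v = e2 v /\ (forall o, e1 v = Some o -> far r ga gb o) }.

Definition Inv r e1 e2 := exists ga gb ori, @InvP r e1 e2 ga gb ori.

Lemma InvP_sym r e1 e2 ga gb ori :
  InvP r e1 e2 ga gb ori -> InvP r e2 e1 ga gb (fun v => ~~ ori v).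
Proof.
case=> h0 h1 h2 h3 h4; split => //.
  move=> v al be g1 g2; have [k1 k2 k3 k4] := h3 v al be g1 g2.
  by split => //; case: (ori v) k1 k2 => /=.
move=> v g; have [k1 k2] := h4 v g; split => // o ho; apply: k2; by rewrite k1.
Qed.

Lemma Inv_sym r e1 e2 : Inv r e1 e2 -> Inv r e2 e1.
Proof. by case=> ga [gb [ori h]]; exists ga, gb, (fun v => ~~ ori v); apply: InvP_sym. Qed.

Lemma near_rho S r u : near S (2 ^ K - 2 ^ r) u -> near S rho u.
Proof. apply: near_mono; rewrite /rho; have := expn_gt0 2 r; lia. Qed.

Lemma Inv_cases r e1 e2 ga gb ori v : InvP r e1 e2 ga gb ori ->
  (e1 v = e2 v /\ forall o, e1 v = Some o -> far r ga gb o) \/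
  exists al be, [/\ ga v = Some al, gb v = Some be,
        e1 v = Some (if ori v then val al else val be),
        e2 v = Some (if ori v then val be else val al) &
        near A rho (val al) /\ near B rho (val be)].
Proof.
move=> H; case E: (ga v) => [al|]; last by left; apply: (i_id H).
case E': (gb v) => [be|]; last by have := proj2 (i_dom H v) E'; rewrite E.
right; exists al, be; have [k1 k2 k3 k4] := i_game H E E'; split => //.
by split; apply: near_rho; eassumption.
Qed.

Lemma far_ne r ga gb o (g : G) u al be : far r ga gb o -> ga u = Some al -> gb u = Some be ->
  (g = val al \/ g = val be) -> ~~ wG 1 g o /\ ~~ wG 1 o g.
Proof.
move=> [f1 _] h1 h2 hg; have [k1 k2] := f1 _ _ _ h1 h2.
have hw : ~~ wG (2 ^ r) g o by case: hg => ->.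
have hw1 : ~~ wG 1 g o by apply: notwithin_mono hw; rewrite expn_gt0.
split => //; apply/negP => /(within_sym Gsym) h; by rewrite h in hw1.
Qed.

Lemma Inv_rel r e1 e2 ga gb ori (R : G -> G -> Prop) (F : nat -> nat -> formula c.+1) u v :
  InvP r e1 e2 ga gb ori ->
  (forall p q, R p q -> wG 1 p q) ->
  (forall u v, qrank (F u v) = 0) -> (forall u v w, w \in fv (F u v) -> w = u \/ w = v) ->
  (forall (e : nat -> option NA) u v p q, e u = Some p -> e v = Some q ->
      (holds e (F u v) <-> R (val p) (val q))) ->
  (forall (e : nat -> option NB) u v p q, e u = Some p -> e v = Some q ->
      (holds e (F u v) <-> R (val p) (val q))) ->
  ((match e1 u, e1 v with Some p, Some q => R p q | _, _ => False end) <->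
   (match e2 u, e2 v with Some p, Some q => R p q | _, _ => False end)).
Proof.
move=> H hR hq hfv hA hB.
have nR : forall p q, ~~ wG 1 p q -> ~ R p q by move=> p q /negP h /hR.
case: (Inv_cases u H) => [[eu fu]|[alu [beu [gau gbu e1u e2u [nAu nBu]]]]];
case: (Inv_cases v H) => [[ev fv']|[alv [bev [gav gbv e1v e2v [nAv nBv]]]]].
- by rewrite eu ev.
- rewrite -eu e1v e2v; case E: (e1 u) => [o|] //.
  have fo := fu o E.
  have [_ k1] := far_ne (g := val alv) fo gav gbv (or_introl erefl).
  have [_ k2] := far_ne (g := val bev) fo gav gbv (or_intror erefl).
  by case: (ori v); split => /nR.
- rewrite -ev e1u e2u; case E: (e1 v) => [o|] //.
  have fo := fv' o E.
  have [k1 _] := far_ne (g := val alu) fo gau gbu (or_introl erefl).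
  have [k2 _] := far_ne (g := val beu) fo gau gbu (or_intror erefl).
  by case: (ori u); split => /nR.
- rewrite e1u e2u e1v e2v.
  have hE : holds ga (F u v) <-> holds gb (F u v).
    apply: (i_eqv H); first by rewrite hq.
    by move=> w /hfv [] ->; rewrite ?gau ?gav.
  rewrite (hA _ _ _ _ _ gau gav) (hB _ _ _ _ _ gbu gbv) in hE.
  case: (ori u); case: (ori v) => //; try by [rewrite hE];
    split => /nR h; exfalso; apply: h; by [apply: cross | apply: cross'].
Qed.

Lemma Inv_col r e1 e2 ga gb ori i v : InvP r e1 e2 ga gb ori ->
  ((match e1 v with Some p => col G i p | None => False end) <->
   (match e2 v with Some p => col G i p | None => False end)).
Proof.
move=> H.
case: (Inv_cases v H) => [[ev _]|[al [be [ga1 gb1 e1v e2v _]]]]; first by rewrite ev.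
have hE : holds ga (FCol (lift ord_max i) v) <-> holds gb (FCol (lift ord_max i) v).
  apply: (i_eqv H) => // w; rewrite inE => /eqP ->; by rewrite ga1.
move: hE; rewrite /= ga1 gb1 /= liftK e1v e2v.
by case: (ori v) => // h; split => /h.
Qed.

Lemma far_drop_mono r ga gb o x : far r.+1 ga gb o -> far r (dropv x ga) (dropv x gb) o.
Proof.
move=> [f1 f2]; split.
  move=> u al be; rewrite /dropv; case: eqP => // _ h1 h2.
  have [k1 k2] := f1 _ _ _ h1 h2.
  by split; apply: notwithin_mono; try eassumption; rewrite leq_pexp2l.
move=> s hs; apply: notwithin_mono (f2 _ hs).
by rewrite leq_sub2r // leq_pexp2l.
Qed.

Lemma near_step r u : near A (2 ^ K - 2 ^ r.+1) u -> near A (2 ^ K - 2 ^ r) u.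
Proof. by apply: near_mono; apply: leq_sub2l; rewrite leq_pexp2l. Qed.
Lemma near_stepB r u : near B (2 ^ K - 2 ^ r.+1) u -> near B (2 ^ K - 2 ^ r) u.
Proof. by apply: near_mono; apply: leq_sub2l; rewrite leq_pexp2l. Qed.

Lemma Inv_id_step r e1 e2 ga gb ori x a : InvP r.+1 e1 e2 ga gb ori ->
  far r (dropv x ga) (dropv x gb) a ->
  InvP r (upd e1 x a) (upd e2 x a) (dropv x ga) (dropv x gb) ori.
Proof.
move=> H hf; split.
- exact: ltnW (i_r H).
- exact: domeq_drop (i_dom H).
- exact: Eqv_drop (Eqv_mono (leqnSn r) (i_eqv H)).
- move=> v al be; rewrite /dropv /upd; case: eqP => // _ h1 h2.
  have [k1 k2 k3 k4] := i_game H h1 h2.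
  by split => //; [apply: near_step|apply: near_stepB].
- move=> v; rewrite /dropv /upd; case: eqP => [_ _|_ h].
    by split => // o [<-].
  have [k1 k2] := i_id H h; split => // o /k2; exact: far_drop_mono.
Qed.

Lemma Inv_game_step r e1 e2 ga gb ori x al be (bo : bool) : InvP r.+1 e1 e2 ga gb ori ->
  Eqv r (upd (dropv x ga) x al) (upd (dropv x gb) x be) ->
  near A (2 ^ K - 2 ^ r) (val al) -> near B (2 ^ K - 2 ^ r) (val be) ->
  (forall v o, v != x -> ga v = None -> e1 v = Some o ->
      ~~ wG (2 ^ r) (val al) o /\ ~~ wG (2 ^ r) (val be) o) ->
  InvP r (upd e1 x (if bo then val al else val be)) (upd e2 x (if bo then val be else val al))
    (upd (dropv x ga) x al) (upd (dropv x gb) x be) (fun i => if i == x then bo else ori i).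
Proof.
move=> H hE hnA hnB hfar; split.
- exact: ltnW (i_r H).
- apply: domeq_upd; exact: domeq_drop (i_dom H).
- exact: hE.
- move=> v al' be'; rewrite /dropv /upd; case: eqP => [_ [<-] [<-]|_ h1 h2] //.
  have [k1 k2 k3 k4] := i_game H h1 h2.
  by split => //; [apply: near_step|apply: near_stepB].
- move=> v; rewrite /dropv /upd; case: eqP => // /eqP vx h.
  have [k1 k2] := i_id H h; split => // o ho.
  have [f1 f2] := far_drop_mono x (k2 o ho); split => //.
  move=> u al' be'; rewrite /upd; case: eqP => [_ [<-] [<-]|/eqP ux h1 h2].
    exact: (hfar v o vx h ho).
  by apply: (f1 u); rewrite /dropv (negbTE ux).
Qed.

Lemma Inv_forth r e1 e2 x a : Inv r.+1 e1 e2 -> exists b, Inv r (upd e1 x a) (upd e2 x b).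
Proof.
case=> ga [gb [ori H]].
have hr := i_r H.
have hK : 2 ^ r.+1 <= 2 ^ K by rewrite leq_pexp2l.
have hS := pow2S r; have hp : 0 < 2 ^ r by rewrite expn_gt0.
have E1 : 2 ^ r.+1 - 1 = 2 ^ r - 1 + 2 ^ r by lia.
have he' : Eqv r.+1 (dropv x ga) (dropv x gb) := Eqv_drop (x := x) (i_eqv H).
case: (classic (exists v o, [/\ v != x, ga v = None, e1 v = Some o & wG (2 ^ r) o a]))
  => [[v [o [vx gv ev wo]]]|n1].
  exists a, (dropv x ga), (dropv x gb), ori; apply: Inv_id_step => //.
  have [_ fo] := i_id H gv; have [f1 f2] := fo o ev.
  split.
    move=> u al be; rewrite /dropv; case: eqP => // _ h1 h2.
    have [k1 k2] := f1 _ _ _ h1 h2.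
    split; apply/negP => h.
      by rewrite hS (within_trans h (within_sym Gsym wo)) in k1.
    by rewrite hS (within_trans h (within_sym Gsym wo)) in k2.
  move=> s hs; apply/negP => h; have := f2 s hs.
  by rewrite E1 (within_trans h (within_sym Gsym wo)).
case: (classic (near A (2 ^ r - 1) a \/
   exists v al, [/\ v != x, ga v = Some al & wG (2 ^ r) (val al) a])) => [hA|n2].
  have hnA : near A (2 ^ K - 2 ^ r) a.
    case: hA => [h|[v [al [vx gv w]]]]; first by apply: near_mono h; lia.
    case E: (gb v) => [be|]; last by have := proj2 (i_dom H v) E; rewrite gv.
    have [_ _ k3 _] := i_game H gv E.
    have := near_trans k3 w; apply: near_mono; lia.
  have aN : a \in nbhd rho A by apply: (near_nbhd hnA); rewrite /rho; lia.
  pose aA : NA := exist _ a aN.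
  have [be hbe] := Eqv_forth x aA he'.
  have hx : upd (dropv x ga) x aA x = Some aA by rewrite /upd eqxx.
  have hx' : upd (dropv x gb) x be x = Some be by rewrite /upd eqxx.
  have hT : near B (2 ^ r - 1) (val be) \/ exists v al be0,
      [/\ v != x, ga v = Some al, gb v = Some be0 & wG (2 ^ r) (val be0) (val be)].
    case: hA => [[s hs ws]|[v [al [vx gv w]]]].
      left.
      have sN : s \in nbhd rho A.
        by apply: (near_nbhd (d := 0)) => //; exists s => //; exact: within_refl.
      have hD : holds (upd (dropv x ga) x aA) (DX c r x).
        apply/(DX_sem _ hx); exists (exist _ s sN); first by rewrite /= unlift_none.
        apply: within_val_ind.
          move=> z; rewrite within_expand => wz.
          apply: (near_nbhd (d := 2 ^ r - 1 + (2 ^ r).-1)).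
            by exists s => //; apply: within_trans ws wz.
          rewrite /rho; lia.
        rewrite within_expand /=; have := within_sym Gsym ws; by rewrite subn1.
      have hq : qrank (DX c r x) <= r by rewrite DX_qrank.
      have hf : forall w, w \in fv (DX c r x) -> upd (dropv x ga) x aA w <> None.
        by move=> w0 /DX_fv ->; rewrite hx.
      have hD' := proj1 (hbe _ hq hf) hD.
      case/(DX_sem _ hx'): hD' => z hz wz; exists (val z); first by move: hz; rewrite /= unlift_none.
      have := within_ind_val wz; rewrite within_expand subn1 => h.
      move: h; apply: within_sym; exact: Gsym.
    right.
    case E: (gb v) => [be0|]; last by have := proj2 (i_dom H v) E; rewrite gv.
    exists v, al, be0; split => //.
    have hv : upd (dropv x ga) x aA v = Some al by rewrite /upd /dropv (negbTE vx).
    have hv' : upd (dropv x gb) x be v = Some be0 by rewrite /upd /dropv (negbTE vx).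
    have [_ _ k3 _] := i_game H gv E.
    have hd : holds (upd (dropv x ga) x aA) (dfm c.+1 r v x).
      apply/(dfm_sem _ hv hx); apply: within_val_ind.
        move=> z; rewrite within_expand => wz.
        apply: (near_nbhd (d := 2 ^ K - 2 ^ r.+1 + 2 ^ r)); first exact: near_trans k3 wz.
        rewrite /rho; lia.
      by rewrite within_expand.
    have hq : qrank (dfm c.+1 r v x) <= r by rewrite dfm_qrank.
    have hf : forall w, w \in fv (dfm c.+1 r v x) -> upd (dropv x ga) x aA w <> None.
      by move=> w0 /dfm_fv [] ->; rewrite ?hv ?hx.
    have hd' := proj1 (hbe _ hq hf) hd.
    have := within_ind_val (proj1 (dfm_sem _ hv' hx') hd').
    by rewrite within_expand.
  exists (val be), (upd (dropv x ga) x aA), (upd (dropv x gb) x be),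
    (fun i => if i == x then true else ori i).
  apply: (Inv_game_step true H hbe) => //.
    case: hT => [h|[v [al [be0 [vx gv gbv w]]]]]; first by apply: near_mono h; lia.
    have [_ _ _ k4] := i_game H gv gbv; have := near_trans k4 w; apply: near_mono; lia.
  move=> v o vx gv ev; have [_ fo] := i_id H gv; have [f1 f2] := fo o ev.
  split; apply/negP => h.
    by apply: n1; exists v, o; split => //; move: h; apply: within_sym; exact: Gsym.
  case: hT => [[z hz wz]|[u [al [be0 [ux gu gbu w]]]]].
    have := f2 z; rewrite inE hz orbT E1 (within_trans wz h); by move/(_ isT).
  have [_ k] := f1 _ _ _ gu gbu.
  by rewrite hS (within_trans w h) in k.
case: (classic (near B (2 ^ r - 1) a \/
   exists v be, [/\ v != x, gb v = Some be & wG (2 ^ r) (val be) a])) => [hB|n3].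
  have hnB : near B (2 ^ K - 2 ^ r) a.
    case: hB => [h|[v [be [vx gv w]]]]; first by apply: near_mono h; lia.
    case E: (ga v) => [al|]; last by have := proj1 (i_dom H v) E; rewrite gv.
    have [_ _ _ k4] := i_game H E gv.
    have := near_trans k4 w; apply: near_mono; lia.
  have aN : a \in nbhd rho B by apply: (near_nbhd hnB); rewrite /rho; lia.
  pose aB : NB := exist _ a aN.
  have [al hal] := Eqv_back x aB (domeq_drop x (i_dom H)) he'.
  have hx : upd (dropv x gb) x aB x = Some aB by rewrite /upd eqxx.
  have hx' : upd (dropv x ga) x al x = Some al by rewrite /upd eqxx.
  have hT : near A (2 ^ r - 1) (val al) \/ exists v al0 be0,
      [/\ v != x, ga v = Some al0, gb v = Some be0 & wG (2 ^ r) (val al0) (val al)].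
    case: hB => [[s hs ws]|[v [be [vx gv w]]]].
      left.
      have sN : s \in nbhd rho B.
        by apply: (near_nbhd (d := 0)) => //; exists s => //; exact: within_refl.
      have hD : holds (upd (dropv x gb) x aB) (DX c r x).
        apply/(DX_sem _ hx); exists (exist _ s sN); first by rewrite /= unlift_none.
        apply: within_val_ind.
          move=> z; rewrite within_expand => wz.
          apply: (near_nbhd (d := 2 ^ r - 1 + (2 ^ r).-1)).
            by exists s => //; apply: within_trans ws wz.
          rewrite /rho; lia.
        rewrite within_expand /=; have := within_sym Gsym ws; by rewrite subn1.
      have hq : qrank (DX c r x) <= r by rewrite DX_qrank.
      have hf : forall w, w \in fv (DX c r x) -> upd (dropv x ga) x al w <> None.
        by move=> w0 /DX_fv ->; rewrite hx'.
      have hD' := proj2 (hal _ hq hf) hD.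
      case/(DX_sem _ hx'): hD' => z hz wz; exists (val z); first by move: hz; rewrite /= unlift_none.
      have := within_ind_val wz; rewrite within_expand subn1 => h.
      move: h; apply: within_sym; exact: Gsym.
    right.
    case E: (ga v) => [al0|]; last by have := proj1 (i_dom H v) E; rewrite gv.
    exists v, al0, be; split => //.
    have hv : upd (dropv x gb) x aB v = Some be by rewrite /upd /dropv (negbTE vx).
    have hv' : upd (dropv x ga) x al v = Some al0 by rewrite /upd /dropv (negbTE vx).
    have [_ _ _ k4] := i_game H E gv.
    have hd : holds (upd (dropv x gb) x aB) (dfm c.+1 r v x).
      apply/(dfm_sem _ hv hx); apply: within_val_ind.
        move=> z; rewrite within_expand => wz.
        apply: (near_nbhd (d := 2 ^ K - 2 ^ r.+1 + 2 ^ r)); first exact: near_trans k4 wz.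
        rewrite /rho; lia.
      by rewrite within_expand.
    have hq : qrank (dfm c.+1 r v x) <= r by rewrite dfm_qrank.
    have hf : forall w, w \in fv (dfm c.+1 r v x) -> upd (dropv x ga) x al w <> None.
      by move=> w0 /dfm_fv [] ->; rewrite ?hv' ?hx'.
    have hd' := proj2 (hal _ hq hf) hd.
    have := within_ind_val (proj1 (dfm_sem _ hv' hx') hd').
    by rewrite within_expand.
  exists (val al), (upd (dropv x ga) x al), (upd (dropv x gb) x aB),
    (fun i => if i == x then false else ori i).
  apply: (Inv_game_step false H hal) => //.
    case: hT => [h|[v [al0 [be0 [vx gv gbv w]]]]]; first by apply: near_mono h; lia.
    have [_ _ k3 _] := i_game H gv gbv; have := near_trans k3 w; apply: near_mono; lia.
  move=> v o vx gv ev; have [_ fo] := i_id H gv; have [f1 f2] := fo o ev.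
  split; apply/negP => h; last first.
    by apply: n1; exists v, o; split => //; move: h; apply: within_sym; exact: Gsym.
  case: hT => [[z hz wz]|[u [al0 [be0 [ux gu gbu w]]]]].
    have := f2 z; rewrite inE hz E1 (within_trans wz h); by move/(_ isT).
  have [k _] := f1 _ _ _ gu gbu.
  by rewrite hS (within_trans w h) in k.
exists a, (dropv x ga), (dropv x gb), ori; apply: Inv_id_step => //.
split.
  move=> u al be; rewrite /dropv; case: eqP => // /eqP ux h1 h2.
  split; apply/negP => h; [apply: n2|apply: n3]; right.
    by exists u, al.
  by exists u, be.
move=> s; rewrite inE => /orP [hs|hs]; apply/negP => h; [apply: n2|apply: n3]; left;
  by exists s.
Qed.

Lemma Inv_holds f : forall r e1 e2, qrank f <= r -> Inv r e1 e2 ->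
  (holds (M := G) e1 f <-> holds (M := G) e2 f).
Proof.
elim: f => //=.
- move=> u v r e1 e2 _ [ga [gb [ori H]]].
  apply: (Inv_rel (R := fun p q => p = q) (F := fun u v => FEq u v) u v H) => //.
  + by move=> p q ->; exact: within_refl.
  + by move=> u' v' w; rewrite !inE => /orP [] /eqP; auto.
  + move=> e u' v' p q /= -> ->; split => [->|/val_inj] //.
  + move=> e u' v' p q /= -> ->; split => [->|/val_inj] //.
- move=> u v r e1 e2 _ [ga [gb [ori H]]].
  apply: (Inv_rel (R := fun p q => adj G p q) (F := fun u v => FAdj u v) u v H) => //.
  + by move=> p q h; apply/within1; right.
  + by move=> u' v' w; rewrite !inE => /orP [] /eqP; auto.
  + by move=> e u' v' p q /= -> ->.
  + by move=> e u' v' p q /= -> ->.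
- move=> i v r e1 e2 _ [ga [gb [ori H]]]; exact: Inv_col H.
- by move=> g IH r e1 e2 hr hI; rewrite (IH r e1 e2).
- move=> g IHg g' IHg' r e1 e2; rewrite geq_max => /andP [h1 h2] hI.
  by rewrite (IHg r e1 e2) // (IHg' r e1 e2).
- move=> g IHg g' IHg' r e1 e2; rewrite geq_max => /andP [h1 h2] hI.
  by rewrite (IHg r e1 e2) // (IHg' r e1 e2).
- move=> g IHg g' IHg' r e1 e2; rewrite geq_max => /andP [h1 h2] hI.
  by rewrite (IHg r e1 e2) // (IHg' r e1 e2).
- move=> x g IH [|r] e1 e2 // hr hI; split.
    move=> [a ha]; have [b hb] := Inv_forth x a hI; exists b.
    by apply/(IH r _ _ hr hb).
  move=> [b hb]; have [a ha] := Inv_forth x b (Inv_sym hI); exists a.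
  by apply/(IH r _ _ hr (Inv_sym ha)).
- move=> x g IH [|r] e1 e2 // hr hI; split.
    move=> ha b; have [a hb] := Inv_forth x b (Inv_sym hI).
    by apply/(IH r _ _ hr (Inv_sym hb)).
  move=> hb a; have [b ha] := Inv_forth x a hI.
  by apply/(IH r _ _ hr ha).
Qed.

End Main.


Lemma one_dir (c K n : nat) (G : structure c) (A B : {set G})
  (w : 'I_n -> G) (phi : formula c) :
  is_graph G ->
  dist_gt A B (2 ^ K.+1) ->
  same_type K.+1
    (induced (M := expand A) (nbhd (M := G) (2 ^ K - 1) A))
    (induced (M := expand B) (nbhd (M := G) (2 ^ K - 1) B)) ->
  (forall (i : 'I_n) b, b \in A :|: B -> ~~ within (2 ^ K.+1 - 1) (w i) b) ->
  qrank phi <= K ->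
  let env := fun i => omap w (insub i) in
  let psi := FEx n (FAnd (FCol ord_max n) (liftf phi)) in
  (holds (M := expand A) env psi -> holds (M := expand B) env psi).
Proof.
move=> [_ Gsym] hAB hT hw hq env psi /= [x0 [hx0 hphi]].
move: hx0; rewrite /upd eqxx /= unlift_none => hx0.
move/liftf_holds: hphi => hphi.
have hE : Eqv K.+1 (@empty_env (induced (M := expand A) (nbhd (M := G) (rho K) A)))
                   (@empty_env (induced (M := expand B) (nbhd (M := G) (rho K) B))).
  move=> f hf hd; apply: hT => //.
  rewrite /sentence; case E: (fv f) => [|v s] //.
  by have := hd v; rewrite E inE eqxx => /(_ isT).
have aN : x0 \in nbhd (M := G) (rho K) A.
  rewrite inE; apply/existsP; exists x0; rewrite hx0 /=; exact: within_refl.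
pose aA : induced (M := expand A) (nbhd (M := G) (rho K) A) := exist _ x0 aN.
have [b hb] := Eqv_forth n aA hE.
have hx : upd (@empty_env _) n aA n = Some aA by rewrite /upd eqxx.
have hbB : val b \in B.
  have hc : holds (upd (@empty_env _) n aA) (FCol ord_max n) by rewrite /= /upd eqxx /= unlift_none.
  have hq0 : qrank (FCol (c := c.+1) ord_max n) <= K by [].
  have hf0 : forall v, v \in fv (FCol (c := c.+1) ord_max n) -> upd (@empty_env _) n aA v <> None.
    by move=> v; rewrite inE => /eqP ->; rewrite hx.
  have := proj1 (hb _ hq0 hf0) hc; by rewrite /= /upd eqxx /= unlift_none.
have hI : Inv K A B K (upd env n x0) (upd env n (val b)).
  exists (upd (@empty_env _) n aA), (upd (@empty_env _) n b), (fun _ => true).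
  have hp : 0 < 2 ^ K by rewrite expn_gt0.
  have hS := pow2S K.
  split => //.
  - by apply: domeq_upd.
  - move=> v al be; rewrite /upd; case: eqP => // _ [<-] [<-].
    rewrite subnn; split => //.
      by exists x0 => //; exact: within_refl.
    by exists (val b) => //; exact: within_refl.
  - move=> v; rewrite /upd; case: eqP => // /eqP vn _; split => // o.
    rewrite /env; case E: (insub v) => [i|] //= [<-].
    have far1 : forall y, y \in A :|: B -> forall m, m <= 2 ^ K -> ~~ within m y (w i).
      move=> y hy m hm; apply/negP => h.
      have := hw i y hy; rewrite (within_mono (n := 2 ^ K.+1 - 1) _ (within_sym Gsym h)) //.
      lia.
    split.
      move=> u al be; case: eqP => // _ [<-] [<-]; split.
        by apply: far1 => //; rewrite inE hx0.
      by apply: far1 => //; rewrite inE hbB orbT.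
    by move=> s hs; apply: far1 => //; lia.
have := proj1 (Inv_holds Gsym hAB hq hI) hphi => hphiB.
exists (val b); split => //; exact: (proj2 (liftf_holds _ _ _) hphiB).
Qed.


Theorem theorem4p2 (c k n : nat) (G : structure c) (A B : {set G})
  (w : 'I_n -> G) (phi : formula c) :
  is_graph G -> 1 <= k ->
  dist_gt A B (2 ^ k) ->
  same_type k
    (induced (M := expand A) (nbhd (M := G) (2 ^ k.-1 - 1) A))
    (induced (M := expand B) (nbhd (M := G) (2 ^ k.-1 - 1) B)) ->
  (* dist(wbar, A u B) >= 2^k *)
  (forall (i : 'I_n) b, b \in A :|: B -> ~~ within (2 ^ k - 1) (w i) b) ->
  all (fun v => v <= n) (fv phi) ->
  qrank phi <= k - 1 ->
  let env := fun i => omap w (insub i) in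
  let psi := FEx n (FAnd (FCol ord_max n) (liftf phi)) in
  (holds (M := expand A) env psi <-> holds (M := expand B) env psi).
Proof.
move=> hG hk hAB hT hw _ hq.
case: k hk hAB hT hw hq => // K _ hAB hT hw hq.
move: hq; rewrite subn1 /= => hq.
split.
  exact: (one_dir hG hAB hT hw hq).
apply: (one_dir hG _ _ _ hq).
- move=> a b ha hb; apply/negP => h; have := hAB b a hb ha.
  by rewrite (within_sym (proj2 hG) h).
- by move=> f hs hr; apply: iff_sym; apply: hT.
- by move=> i b hb; apply: hw; rewrite setUC.
Qed.
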